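(* Let $\mathcal P$ be a finite set of points in an arbitrary metric space, and let $G=(\mathcal P,E)$ be an undirected network in which every agent is greedy connected and whose number of edges is minimum among all such networks on $\mathcal P$ (a social optimum network). Then there is an assignment of each edge of $E$ to exactly one of its endpoints as owner such that the resulting strategy profile of the undirected greedy routing network creation game is a $2$-approximate Nash equilibrium.
   Context: Undirected variant of the game: $\mathcal P$ is a finite set of points (agents) with metric $d$; each agent $u$ chooses a strategy $S_u\subseteq\{\{u,v\}:v\in\mathcal P\setminus\{u\}\}$ of undirected edges, which it owns; a profile $\mathbf s$ induces the network $G(\mathbf s)$ on $\mathcal P$ in which $\{u,v\}$ is an edge iff $\{u,v\}\in S_u\cup S_v$. A greedy routing path from $u$ to $w$ is a path $(x_1=u,\dots,x_j=w)$ in the network with $d(x_i,w)>d(x_{i+1},w)$ for all $i$; $u$ is greedy connected if it has a greedy routing path to every other agent. The cost of $u$ is $c_u(\mathbf s)=|S_u|$ if $u$ is greedy connected and $\infty$ otherwise. A profile $\mathbf s$ is a $\beta$-approximate Nash equilibrium if no agent $u$ can, by unilaterally changing its strategy, obtain cost strictly less than $\frac1\beta c_u(\mathbf s)$. *)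

(* Defs.v *)
From mathcomp Require Import all_boot all_order all_algebra.
From mathcomp Require Import boolp.
Set Implicit Arguments. Unset Strict Implicit. Unset Printing Implicit Defensive.
Import Order.TTheory GRing.Theory Num.Theory.
Local Open Scope ring_scope.

Section Game.
Variables (R : realFieldType) (T : finType) (d : T -> T -> R).

Definition is_metric : Prop :=
  (forall x y, 0 <= d x y) /\ (forall x y, d x y = 0 <-> x = y) /\
  (forall x y, d x y = d y x) /\ (forall x y z, d x z <= d x y + d y z).

Definition is_network (E : {set {set T}}) : Prop :=
  forall e, e \in E -> #|e| = 2%N.

Definition adj (E : {set {set T}}) (x y : T) : bool := [set x; y] \in E.

Definition greedy_path (E : {set {set T}}) (u w : T) (p : seq T) : bool :=
  path (fun x y => adj E x y && (d y w < d x w)) u p && (last u p == w).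

Definition greedy_connected (E : {set {set T}}) (u : T) : Prop :=
  forall w, w != u -> exists p : seq T, greedy_path E u w p.

Definition all_greedy_connected (E : {set {set T}}) : Prop :=
  forall u, greedy_connected E u.

Definition social_optimum (E : {set {set T}}) : Prop :=
  is_network E /\ all_greedy_connected E /\
  forall E', is_network E' -> all_greedy_connected E' -> (#|E| <= #|E'|)%N.

Definition valid_strategy (u : T) (S : {set {set T}}) : Prop :=
  forall e, e \in S -> u \in e /\ #|e| = 2%N.

Definition profile := T -> {set {set T}}.

Definition valid_profile (s : profile) : Prop := forall u, valid_strategy u (s u).

Definition net (s : profile) : {set {set T}} := \bigcup_(u : T) s u.

(* cost: Some |S_u| if u greedy connected, None = infinity *)
Definition cost (s : profile) (u : T) : option nat :=
  if asbool (greedy_connected (net s) u) then Some #|s u| else None.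

Definition upd (s : profile) (u : T) (S : {set {set T}}) : profile :=
  fun v => if v == u then S else s v.

Definition improves (beta : R) (c' c : option nat) : Prop :=
  match c, c' with
  | None, Some _ => True
  | None, None => False
  | Some _, None => False
  | Some cb, Some ca => (ca%:R : R) < (cb%:R : R) / beta
  end.

Definition approx_NE (beta : R) (s : profile) : Prop :=
  forall u S, valid_strategy u S -> ~ improves beta (cost (upd s u S) u) (cost s u).

End Game.

(* Main.v *)
Require Import Defs.
From mathcomp Require Import all_boot all_order all_algebra.
Set Implicit Arguments. Unset Strict Implicit. Unset Printing Implicit Defensive.
Import Order.TTheory GRing.Theory Num.Theory.
From mathcomp Require Import zify boolp.

Section Aux.
Variables (R : realFieldType) (T : finType) (d : T -> T -> R).

Definition nbr (G : {set {set T}}) (x : T) : {set T} := [set y | [set x; y] \in G].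

Definition hitsb (x : T) (W : {set T}) : bool :=
  [forall w, (w != x) ==> [exists z in W, (d z w < d x w)%R]].

Lemma hitsP x (W : {set T}) :
  reflect (forall w, w != x -> exists2 z, z \in W & (d z w < d x w)%R) (hitsb x W).
Proof.
apply: (iffP forallP) => H w.
  move=> wx; have /implyP/(_ wx)/exists_inP[z zW lt] := H w; by exists z.
apply/implyP => wx; have [z zW lt] := H w wx; by apply/exists_inP; exists z.
Qed.

Lemma hits_mono x (A B : {set T}) :
  hitsb x A -> (forall z, z \in A -> z != x -> z \in B) -> hitsb x B.
Proof.
move=> /hitsP H sub; apply/hitsP => w wx; have [z zA lt] := H w wx.
exists z => //; apply: sub => //; apply/eqP => zx; by rewrite zx ltxx in lt.
Qed.

Lemma local_greedy G : (forall x, hitsb x (nbr G x)) -> all_greedy_connected d G.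
Proof.
move=> H u w.
suff: forall n x, (#|[set z | (d z w < d x w)%R]| <= n)%N -> w != x ->
        exists p, greedy_path d G x w p by apply; apply: leqnn.
elim=> [|n IH] x sz wx; have [z zN lt] := hitsP _ _ (H x) w wx.
  have : z \in [set z | (d z w < d x w)%R] by rewrite inE.
  by move: sz; rewrite leqn0 => /eqP/cards0_eq ->; rewrite inE.
have adjz : adj G x z by move: zN; rewrite inE.
case: (eqVneq w z) => [wz|wz].
  by subst z; exists [:: w]; rewrite /greedy_path /= eqxx andbT adjz lt.
have [p Hp] : exists p, greedy_path d G z w p.
  apply: IH wz; rewrite -ltnS; apply: leq_trans sz.
  apply: (proper_card (A := [set y | (d y w < d z w)%R])).
  apply/properP; split.
    apply/subsetP => y; rewrite !inE => ly; exact: lt_trans ly lt.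
  by exists z; rewrite !inE ?ltxx.
exists (z :: p); move: Hp; rewrite /greedy_path /= => /andP[-> ->].
by rewrite adjz lt.
Qed.

Lemma greedy_local G u : greedy_connected d G u -> hitsb u (nbr G u).
Proof.
move=> H; apply/hitsP => w wu; have [[|z p]] := H w wu.
  by rewrite /greedy_path /= eq_sym (negbTE wu).
by rewrite /greedy_path /= => /andP[/andP[/andP[az lt] _] _]; exists z; rewrite ?inE.
Qed.


Lemma card_bigcup_le (U : finType) (F : T -> {set U}) :
  (#|\bigcup_(x : T) F x| <= \sum_(x : T) #|F x|)%N.
Proof.
apply: (big_ind2 (fun (A : {set U}) n => #|A| <= n)%N) => [|A1 n1 A2 n2 h1 h2|x _].
- by rewrite cards0.
- exact: leq_trans (leq_card_setU A1 A2).1 (leq_add h1 h2).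
- by [].
Qed.

Lemma card_sub_sum (Z : {set {set T}}) :
  is_network Z -> (\sum_(x : T) #|nbr Z x| <= 2 * #|Z|)%N.
Proof.
move=> netZ.
have step x : (#|nbr Z x| <= #|[set e in Z | x \in e]|)%N.
  rewrite -(@card_in_imset _ _ (fun y => [set x; y]) (nbr Z x)).
    apply: subset_leq_card; apply/subsetP => e /imsetP[y yN ->].
    by rewrite inE set21 andbT; move: yN; rewrite inE.
  move=> y y' yN y'N /= eq.
  have : y \in [set x; y'] by rewrite -eq set22.
  rewrite !inE => /orP[/eqP yx|/eqP //].
  by move: yN; rewrite inE yx => /netZ; rewrite cards2 eqxx.
have S1 : (\sum_(x : T) #|nbr Z x| <= \sum_(x : T) #|[set e in Z | x \in e]|)%N.
  by apply: leq_sum => x _; exact: step.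
apply: leq_trans S1 _.
have E1 x : #|[set e in Z | x \in e]| = \sum_(e : {set T}) ((e \in Z) && (x \in e) : nat).
  by rewrite -sum1_card big_mkcond /=; apply: eq_bigr => e _; rewrite inE; case: (_ && _).
rewrite (eq_bigr _ (fun x _ => E1 x)) exchange_big /=.
have E2 e : \sum_(x : T) ((e \in Z) && (x \in e) : nat) = (if e \in Z then 2 else 0)%N.
  case: (boolP (e \in Z)) => eZ.
    rewrite -(netZ e eZ) -sum1_card [in RHS]big_mkcond /=.
    by apply: eq_bigr => i _; case: (i \in e).
  by rewrite big1 // => x _; rewrite (negbTE eZ).
rewrite (eq_bigr _ (fun e _ => E2 e)) -big_mkcond /= sum_nat_const mulnC.
by [].
Qed.

Lemma dev_bound (E Z : {set {set T}}) (V : T -> {set T}) :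
  social_optimum d E -> Z \subset E ->
  (forall x, hitsb x (nbr (E :\: Z) x :|: V x)) ->
  (#|Z| <= \sum_(x : T) #|V x|)%N.
Proof.
move=> [netE [gcE minE]] ZE HV.
pose E2 := \bigcup_(x : T) [set [set x; v] | v in V x :\ x].
pose E' := (E :\: Z) :|: E2.
have net' : is_network E'.
  move=> e; rewrite inE => /orP[|].
    by rewrite inE => /andP[_ eE]; exact: netE e eE.
  move/bigcupP => [x _ /imsetP[v]]; rewrite !inE => /andP[vx _] ->.
  by rewrite cards2 eq_sym vx.
have gc' : all_greedy_connected d E'.
  apply: local_greedy => x; apply: hits_mono (HV x) _ => z; rewrite !inE.
  move=> /orP[/andP[zZ zE]|zV] zx.
    by rewrite zZ zE.
  apply/orP; right; apply/bigcupP; exists x => //; apply/imsetP; exists z => //.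
  by rewrite !inE zx zV.
have h1 := minE E' net' gc'.
have h2 : (#|E'| <= #|E :\: Z| + #|E2|)%N := (leq_card_setU _ _).1.
have h3 : (#|E2| <= \sum_(x : T) #|V x|)%N.
  apply: leq_trans (card_bigcup_le _) _; apply: leq_sum => x _.
  apply: leq_trans (leq_imset_card _ _) _; apply: subset_leq_card; exact: subsetDl.
have h4 := cardsDS ZE.
have h5 := subset_leq_card ZE.
lia.
Qed.

Definition goodb (E : {set {set T}}) x (W : {set T}) : bool :=
  [forall V : {set T}, hitsb x ((nbr E x :\: W) :|: V) ==> (#|W| <= 2 * #|V|)%N].

Lemma nbrD (A B : {set {set T}}) x : nbr (A :\: B) x = nbr A x :\: nbr B x.
Proof. by apply/setP => y; rewrite !inE andbC. Qed.

Lemma nbr_sub (A B : {set {set T}}) x : A \subset B -> nbr A x \subset nbr B x.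
Proof. by move=> /subsetP AB; apply/subsetP => y; rewrite !inE => /AB. Qed.

Lemma orient (E : {set {set T}}) : social_optimum d E ->
  forall Z : {set {set T}}, Z \subset E -> exists O : T -> {set T},
  [/\ forall x, O x \subset nbr Z x,
      forall x y, y \in nbr Z x -> (y \in O x) = ~~ (x \in O y) &
      forall x, goodb E x (O x)].
Proof.
move=> SO; have [netE [gcE minE]] := SO.
have base : exists O : T -> {set T},
  [/\ forall x, O x \subset nbr set0 x,
      forall x y, y \in nbr set0 x -> (y \in O x) = ~~ (x \in O y) &
      forall x, goodb E x (O x)].
  exists (fun _ => set0); split => [x|x y|x]; first exact: sub0set.
    move=> h; exfalso; move: h; rewrite /nbr in_set in_set0. by [].
  by apply/forallP => V; apply/implyP => _; rewrite cards0.
suff: forall n (Z : {set {set T}}), (#|Z| <= n)%N -> Z \subset E -> exists O : T -> {set T},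
  [/\ forall x, O x \subset nbr Z x,
      forall x y, y \in nbr Z x -> (y \in O x) = ~~ (x \in O y) &
      forall x, goodb E x (O x)].
  by move=> H Z; apply: H (leqnn _).
elim=> [|n IH] Z.
  by rewrite leqn0 => /eqP/cards0_eq -> _.
move=> sz ZE.
have netZ : is_network Z by move=> e /(subsetP ZE) /netE.
case: (eqVneq Z set0) => [->|Zn0]; first by [].
have /existsP[x /andP[xn gx]] : [exists x, (nbr Z x != set0) && goodb E x (nbr Z x)].
  case: (boolP [exists x, (nbr Z x != set0) && goodb E x (nbr Z x)]) => // /existsPn Hn; exfalso.
  pose V x := odflt set0 [pick V | hitsb x ((nbr E x :\: nbr Z x) :|: V) &&
                                   (2 * #|V| < #|nbr Z x|)%N].
  have C1 x : hitsb x (nbr (E :\: Z) x :|: V x) /\ (2 * #|V x| <= #|nbr Z x|)%N /\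
              (nbr Z x != set0 -> (2 * #|V x| < #|nbr Z x|)%N).
    rewrite nbrD /V; case: pickP => [V0 /andP[h1 h2]|none] /=.
      by split => //; split => //; exact: ltnW.
    have e0 : nbr Z x = set0.
      apply/eqP; move: (Hn x); rewrite negb_and negbK => /orP[//|/forallPn[V0]].
      by rewrite negb_imply => /andP[h1 h2]; move: (none V0); rewrite h1 ltnNge h2.
    rewrite e0 cards0 setD0 setU0; split; last by split => //; rewrite eqxx.
    exact: greedy_local (gcE x).
  have hb := dev_bound SO ZE (fun x => (C1 x).1).
  have hs := card_sub_sum netZ.
  have [e eZ] : exists e, e \in Z by apply/set0Pn.
  have /cards2P [a [b [ab eab]]] : #|e| == 2 by rewrite netZ.
  have an : nbr Z a != set0 by apply/set0Pn; exists b; rewrite inE -eab.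
  have lt : (\sum_(x : T) 2 * #|V x| < \sum_(x : T) #|nbr Z x|)%N.
    rewrite (bigD1 a) //= [X in (_ < X)%N](bigD1 a) //= -addSn.
    apply: leq_add; first exact: (C1 a).2.2 an.
    by apply: leq_sum => y _; exact: (C1 y).2.1.
  rewrite -big_distrr /= in lt.
  lia.
have [y yx] := set0Pn _ xn.
pose Z' := Z :\: [set e in Z | x \in e].
have sub1 : [set e in Z | x \in e] \subset Z by apply/subsetP => e; rewrite inE => /andP[].
have sz' : (#|Z'| <= n)%N.
  rewrite /Z' (cardsDS sub1).
  have : (0 < #|[set e in Z | x \in e]|)%N.
    by apply/card_gt0P; exists [set x; y]; rewrite inE set21 andbT; move: yx; rewrite inE.
  lia.
have [O' [O'sub O'part O'good]] := IH Z' sz' (subset_trans (subsetDl _ _) ZE).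
have xnot y0 : x \notin nbr Z' y0.
  by rewrite !inE eqxx orbT andbT; case: ([set y0; x] \in Z).
have xO' y0 : x \notin O' y0.
  by apply/negP => /(subsetP (O'sub y0)); rewrite (negbTE (xnot y0)).
have O'x y0 : y0 \notin O' x.
  by apply/negP => /(subsetP (O'sub x)); rewrite !inE eqxx /=; case: ([set x; y0] \in Z).
exists (fun y0 => if y0 == x then nbr Z x else O' y0); split.
- move=> y0; case: eqP => [->|_]; first exact: subxx.
  apply: subset_trans (O'sub y0) _; apply: nbr_sub; exact: subsetDl.
- move=> y1 y2 y12.
  have y21 : y2 != y1.
    by apply/eqP => e; move: y12; rewrite inE e setUid => /netZ; rewrite cards1.
  case: (eqVneq y1 x) => [e1|n1].
    subst y1; rewrite y12 (negbTE y21) /=; by rewrite (negbTE (xO' y2)).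
  case: (eqVneq y2 x) => [e2|n2].
    subst y2; by rewrite (negbTE (xO' y1)); move: y12; rewrite !inE setUC => ->.
  apply: O'part; rewrite !inE; apply/andP; split; last by move: y12; rewrite inE.
  by rewrite eq_sym (negbTE n1) eq_sym (negbTE n2) andbF.
- by move=> y0; case: eqP => [->|_].
Qed.

End Aux.

Unset Implicit Arguments.
Set Strict Implicit.
Local Open Scope ring_scope.

Theorem mainTheorem16 (R : realFieldType) (T : finType) (d : T -> T -> R)
  (E : {set {set T}}) :
  is_metric d -> social_optimum d E ->
  exists s : profile T,
    valid_profile s /\ net s = E /\
    (forall u v, u != v -> [disjoint s u & s v]) /\
    approx_NE d 2 s.
Proof.
move=> met SO; have [netE [gcE minE]] := SO.
have [O [Osub Opart Ogood]] := orient SO (subxx E).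
have F1 x y : y \in O x -> [set x; y] \in E /\ y != x.
  move=> /(subsetP (Osub x)); rewrite inE => h; split => //.
  by apply/eqP => yx; move: (netE _ h); rewrite yx cards2 eqxx.
pose s x := [set [set x; y] | y in O x].
have netsE : net s = E.
  apply/setP => e; apply/bigcupP/idP.
    by case=> x _ /imsetP[y yO ->]; exact: (F1 _ _ yO).1.
  move=> eE; have /cards2P[a [b [ab eab]]] : #|e| == 2%N by rewrite netE.
  subst e.
  have bN : b \in nbr E a by rewrite inE.
  have := Opart a b bN; case bO: (b \in O a) => /= h.
    by exists a => //; apply/imsetP; exists b.
  exists b => //; apply/imsetP; exists a; first by move/esym/negbFE: h.
  by rewrite setUC.
exists s; split; last split; last split.
- move=> u e /imsetP[y yO ->]; split; first by rewrite set21.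
  by rewrite cards2 eq_sym (F1 _ _ yO).2.
- exact: netsE.
- move=> u v uv; rewrite -setI_eq0; apply/eqP/setP => e; rewrite inE in_set0.
  apply/negP => /andP[/imsetP[y yO ->] /imsetP[z zO eq]].
  have vy : v = y.
    have : v \in [set u; y] by rewrite eq set21.
    by rewrite !inE eq_sym (negbTE uv) /= => /eqP.
  have uz : u = z.
    have : u \in [set v; z] by rewrite -eq set21.
    by rewrite !inE (negbTE uv) /= => /eqP.
  subst y z.
  have := Opart u v; rewrite inE (F1 _ _ yO).1 yO zO => /(_ isT).
  by [].
- move=> u S vS.
  have cs : cost d s u = Some #|s u|.
    by rewrite /cost netsE asboolT //; exact: gcE.
  rewrite cs /cost /upd eqxx.
  case: (asboolP (greedy_connected d (net (upd s u S)) u)) => [gc|_] //=.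
  pose VS := [set y | [set u; y] \in S].
  have h2 : hitsb d u ((nbr E u :\: O u) :|: VS).
    apply: hits_mono (greedy_local gc) _ => z; rewrite inE => /bigcupP[v _].
    rewrite /upd; case: eqP => [_|/eqP vu] zin zu.
      by rewrite !inE zin orbT.
    move: zin => /imsetP[y yO eq].
    have uy : u = y.
      have : u \in [set v; y] by rewrite -eq set21.
      by rewrite !inE eq_sym (negbTE vu) /= => /eqP.
    have zv : z = v.
      have : z \in [set v; y] by rewrite -eq set22.
      by rewrite !inE -uy (negbTE zu) orbF => /eqP.
    subst y z.
    have uN : u \in nbr E v by rewrite inE (F1 _ _ yO).1.
    have := Opart v u uN; rewrite yO => /esym vO.
    rewrite !inE; apply/orP; left; rewrite vO /=.
    by rewrite setUC (F1 _ _ yO).1.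
  have hO : (#|O u| <= 2 * #|VS|)%N.
    by have := Ogood u => /forallP/(_ VS)/implyP/(_ h2).
  have hVS : (#|VS| <= #|S|)%N.
    rewrite -(@card_in_imset _ _ (fun y => [set u; y]) VS).
      by apply: subset_leq_card; apply/subsetP => e /imsetP[y]; rewrite inE => yS ->.
    move=> y y' yV y'V /= eq.
    have : y \in [set u; y'] by rewrite -eq set22.
    rewrite !inE => /orP[/eqP yu|/eqP //].
    move: yV; rewrite inE yu => /vS [_]; by rewrite cards2 eqxx.
  have hs : (#|s u| <= #|O u|)%N by apply: leq_imset_card.
  rewrite ltr_pdivlMr ?ltr0n // -natrM ltr_nat => lt.
  have : (#|S| * 2 < 2 * #|S|)%N.
    by apply: (leq_trans lt); apply: (leq_trans hs); apply: (leq_trans hO); rewrite leq_mul2l hVS orbT.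
  by rewrite mulnC ltnn.
Qed.
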